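(* In the setting of the context, suppose Condition I holds: $ZR^i\in L^1$ for all $i\in\{1,\dots,d\}$ and all $Z\in\mathcal{Q}$. Then the set $C_{\mathcal{Q}}:=\{\mathbb{E}[-Z(R-r\mathbf{1})]:Z\in\mathcal{Q}\}$ is a convex subset of $\mathbb{R}^d$, and for every $\pi\in\mathbb{R}^d$, $\rho(X_\pi)=\sup_{c\in C_{\mathcal{Q}}}\pi\cdot c$. Moreover, $\rho$ satisfies the Fatou property on $\mathcal{X}=\{X_\pi:\pi\in\mathbb{R}^d\}$: if $X_n,X\in\mathcal{X}$, $X_n\to X$ a.s. and $|X_n|\le Y$ a.s. for some $Y\in L$, then $\rho(X)\le\liminf_n\rho(X_n)$.
   Context: Let $(\Omega,\mathcal{F},\mathbb{P})$ be a probability space and a market: riskless asset $S^0_0=1$, $S^0_1=1+r$, $r>-1$; risky assets $S^1,\dots,S^d$ with constants $S^i_0>0$ and real-valued $\mathcal{F}$-measurable $S^i_1$; returns $R^i:=(S^i_1-S^i_0)/S^i_0$, $R=(R^1,\dots,R^d)$. Standing assumptions: nonredundancy (if $\theta\in\mathbb{R}^{1+d}$ with $\sum_{i=0}^d\theta^iS^i_t=0$ a.s. for $t\in\{0,1\}$ then $\theta=0$), $R^i\in L^1$, $\mathbb{E}[R^i]\ne r$ for some $i$. Excess return: $X_\pi:=\pi\cdot(R-r\mathbf{1})$. $L$ is a Riesz space with $L^\infty\subset L\subset L^1$ containing all $X_\pi$. $\mathcal{D}:=\{Z\in L^1:Z\ge0,\mathbb{E}[Z]=1\}$; $\mathcal{Q}\subset\mathcal{D}$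 is convex with $1\in\mathcal{Q}$ and $\rho(X)=\sup_{Z\in\mathcal{Q}}\mathbb{E}[-ZX]$ on $L$, where $\mathbb{E}[-ZX]:=\mathbb{E}[ZX^-]-\mathbb{E}[ZX^+]$ with $\mathbb{E}[-ZX]=\infty$ if $\mathbb{E}[ZX^-]=\infty$. *)

(* Defs.v *)
From HB Require Import structures.
From mathcomp Require Import all_boot all_order all_algebra.
From mathcomp Require Import all_classical all_reals all_analysis.
Set Implicit Arguments. Unset Strict Implicit. Unset Printing Implicit Defensive.
Import Order.TTheory GRing.Theory Num.Theory.
Local Open Scope classical_set_scope.
Local Open Scope ring_scope.

Section market.
Context {disp : measure_display} {T : measurableType disp} {R : realType}.

Definition ret (d : nat) (S0 : 'I_d -> R) (S1 : 'I_d -> T -> R) (i : 'I_d) (w : T) : R :=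
  (S1 i w - S0 i) / S0 i.

Definition Xpi (d : nat) (S0 : 'I_d -> R) (S1 : 'I_d -> T -> R) (r : R)
  (pi : 'rV[R]_d) (w : T) : R :=
  \sum_(i < d) pi 0 i * (ret S0 S1 i w - r).

Definition dotv (d : nat) (u v : 'rV[R]_d) : R := \sum_(i < d) u 0 i * v 0 i.

(* nonredundancy: sum_{i=0}^d theta^i S^i_t = 0 a.s. for t = 0,1 implies theta = 0;
   theta^0 is theta0, (theta^1..theta^d) is theta *)
Definition nonredundant (P : probability T R) (d : nat) (r : R)
  (S0 : 'I_d -> R) (S1 : 'I_d -> T -> R) : Prop :=
  forall (theta0 : R) (theta : 'I_d -> R),
    theta0 * 1 + \sum_(i < d) theta i * S0 i = 0 ->
    {ae P, forall w, theta0 * (1 + r) + \sum_(i < d) theta i * S1 i w = 0} ->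
    theta0 = 0 /\ (forall i, theta i = 0).

Definition Linfty (P : probability T R) : set (T -> R) :=
  [set f : T -> R | measurable_fun setT f /\ exists M : R, {ae P, forall w, `|f w| <= M}].

Definition L1 (P : probability T R) : set (T -> R) :=
  [set f | P.-integrable setT (fun w => (f w)%:E)].

Definition riesz_space (L : set (T -> R)) : Prop :=
  L (fun _ => 0) /\
  (forall f g, L f -> L g -> L (fun w => f w + g w)) /\
  (forall (a : R) f, L f -> L (fun w => a * f w)) /\
  (forall f g, L f -> L g -> L (fun w => Num.max (f w) (g w))).

Definition Dset (P : probability T R) : set (T -> R) :=
  [set Z | L1 P Z /\ {ae P, forall w, 0 <= Z w} /\
           (\int[P]_w (Z w)%:E = 1)%E].

Definition convex_fun_set (Q : set (T -> R)) : Prop :=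
  forall Z1 Z2 (t : R), Q Z1 -> Q Z2 -> 0 <= t <= 1 ->
    Q (fun w => t * Z1 w + (1 - t) * Z2 w).

(* E[-Z X] := E[Z X^-] - E[Z X^+], = +oo if E[Z X^-] = +oo *)
Definition Eneg (P : probability T R) (Z X : T -> R) : \bar R :=
  let a := (\int[P]_w (Z w * Num.max (- X w) 0)%:E)%E in
  let b := (\int[P]_w (Z w * Num.max (X w) 0)%:E)%E in
  if a == +oo%E then +oo%E else (a - b)%E.

Definition rho (P : probability T R) (Q : set (T -> R)) (X : T -> R) : \bar R :=
  ereal_sup [set Eneg P Z X | Z in Q].

Definition CQ (P : probability T R) (Q : set (T -> R)) (d : nat)
  (S0 : 'I_d -> R) (S1 : 'I_d -> T -> R) (r : R) : set 'rV[R]_d :=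
  [set c | exists2 Z, Q Z &
     c = \row_(i < d) Rintegral P setT (fun w => - (Z w * (ret S0 S1 i w - r)))].

Definition convex_rV (d : nat) (C : set 'rV[R]_d) : Prop :=
  forall c1 c2 (t : R), C c1 -> C c2 -> 0 <= t <= 1 ->
    C (t *: c1 + (1 - t) *: c2).

End market.

(* Main.v *)
Require Import Defs.
From HB Require Import structures.
From mathcomp Require Import all_boot all_order all_algebra.
From mathcomp Require Import all_classical all_reals all_analysis.
From mathcomp Require Import measurable_realfun.
From mathcomp Require Import ring lra.
Import Order.TTheory GRing.Theory Num.Theory.
Import numFieldNormedType.Exports.
Local Open Scope classical_set_scope.
Local Open Scope ring_scope.

Lemma limn_einf_le (R : realType) (u v : (\bar R)^nat) :
  (forall n, u n <= v n)%E -> (limn_einf u <= limn_einf v)%E.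
Proof.
move=> uv; rewrite !limn_einf_lim; apply: lee_lim; [exact: is_cvg_einfs|exact: is_cvg_einfs|].
apply: nearW => n; apply: le_ereal_inf_tmp => _ [k /= nk <-].
apply: le_trans (uv k); apply: ereal_inf_lbound; by exists k.
Qed.

Lemma L1_meas {d} {T : measurableType d} {R : realType} {P : probability T R} {f} :
  L1 P f -> measurable_fun setT f.
Proof. by case/integrableP => mf _; apply/measurable_EFinP. Qed.

Lemma L1_ext {d} {T : measurableType d} {R : realType} {P : probability T R} {f g} :
  (forall w, f w = g w) -> L1 P f -> L1 P g.
Proof. by move=> fg; have -> : f = g by apply/funext. Qed.

Lemma L1_add {d} {T : measurableType d} {R : realType} {P : probability T R} f g :
  L1 P f -> L1 P g -> L1 P (fun w => f w + g w).
Proof.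
move=> hf hg; have := integrableD measurableT hf hg.
by apply: eq_integrable => // w _ /=; rewrite EFinD.
Qed.

Lemma L1_scale {d} {T : measurableType d} {R : realType} {P : probability T R} (k : R) f :
  L1 P f -> L1 P (fun w => k * f w).
Proof.
move=> hf; have := integrableZl measurableT k hf.
by apply: eq_integrable => // w _ /=; rewrite EFinM.
Qed.

Lemma L1_cst {d} {T : measurableType d} {R : realType} {P : probability T R} (k : R) :
  L1 P (fun _ => k).
Proof.
apply/integrableP; split; first exact: measurable_cst.
rewrite integral_cst //=; apply: lte_mul_pinfty => //; exact: (le_lt_trans (probability_le1 P measurableT) (ltry 1)).
Qed.

Lemma L1_sum {d} {T : measurableType d} {R : realType} {P : probability T R} {n : nat}
  {F : 'I_n -> T -> R} : (forall i, L1 P (F i)) -> L1 P (fun w => \sum_i F i w).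
Proof.
move=> hF; have := @integrable_sum _ _ _ P setT measurableT _ (index_enum 'I_n) xpredT
  (fun i w => (F i w)%:E) (fun i _ => hF i).
by apply: eq_integrable => // w _ /=; rewrite sumEFin.
Qed.

Lemma Rint_EFin {d} {T : measurableType d} {R : realType} {P : probability T R} {f} :
  L1 P f -> (\int[P]_w (f w)%:E)%E = (Rintegral P setT f)%:E.
Proof. by move=> hf; rewrite /Rintegral fineK //; exact: integrable_fin_num. Qed.

Lemma Rint_lin {d} {T : measurableType d} {R : realType} {P : probability T R} (n : nat)
  (F : 'I_n -> T -> R) (a : 'I_n -> R) : (forall i, L1 P (F i)) ->
  Rintegral P setT (fun w => \sum_i a i * F i w) = \sum_i a i * Rintegral P setT (F i).
Proof.
move=> hF; apply: EFin_inj; rewrite -Rint_EFin; last first.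
  by apply: L1_sum => i; apply: L1_scale.
under eq_integral do rewrite -sumEFin.
rewrite integral_sum //; last by move=> i; apply: L1_scale.
rewrite -sumEFin; apply: eq_bigr => i _.
under eq_integral do rewrite EFinM.
rewrite integralZl //; [rewrite (Rint_EFin (hF i)) EFinM // | exact: hF].
Qed.

Lemma max_diff {R : realType} (x : R) : (Num.max (- x) 0 : R) - (Num.max x 0 : R) = - x.
Proof.
rewrite /Order.max; case: ifPn => h1; case: ifPn => h2; rewrite -?leNgt in h1 h2; lra.
Qed.

Lemma max_norm {R : realType} (x : R) : `|(Num.max x 0 : R)| <= `|x|.
Proof.
rewrite /Order.max; case: ifPn => h1; rewrite ?normr0 //.
Qed.

Lemma Eneg_dot {d} {T : measurableType d} {R : realType} {P : probability T R}
  (n : nat) (S0 : 'I_n -> R) (S1 : 'I_n -> T -> R) (r : R) (Z : T -> R) (pi : 'rV[R]_n) :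
  L1 P Z -> (forall i, L1 P (fun w => Z w * ret S0 S1 i w)) ->
  measurable_fun setT (Xpi S0 S1 r pi) ->
  Eneg P Z (Xpi S0 S1 r pi) =
  (dotv pi (\row_i Rintegral P setT (fun w => - (Z w * (ret S0 S1 i w - r)))))%:E.
Proof.
move=> hZ hZR hXm.
set X := Xpi S0 S1 r pi.
have hi : forall i, L1 P (fun w => - (Z w * (ret S0 S1 i w - r))).
  move=> i; apply: (L1_ext (f := fun w => (-1) * (Z w * ret S0 S1 i w) + r * Z w)).
    by move=> w; ring.
  by apply: L1_add; apply: L1_scale.
have eZX : forall w, \sum_i pi 0 i * (- (Z w * (ret S0 S1 i w - r))) = - (Z w * X w).
  by move=> w; rewrite /X /Xpi mulr_sumr -sumrN; apply: eq_bigr => i _; ring.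
have hZX : L1 P (fun w => - (Z w * X w)).
  apply: (L1_ext eZX); apply: (L1_sum (F := fun i w => pi 0 i * (- (Z w * (ret S0 S1 i w - r))))).
  by move=> i; apply: L1_scale.
have mZ := L1_meas hZ.
have hab : forall g : T -> R, measurable_fun setT g -> (forall w, `|g w| <= `|X w|) ->
    L1 P (fun w => Z w * g w).
  move=> g mg hg; apply: le_integrable hZX => //.
    by apply/measurable_EFinP; apply: measurable_funM.
  by move=> w _ /=; rewrite lee_fin normrN !normrM ler_wpM2l.
have ha : L1 P (fun w => Z w * Num.max (- X w) 0).
  apply: hab.
    apply: (measurable_maxr (f := fun w => - X w) (g := fun _ => 0)); last exact: measurable_cst.
    exact: measurableT_comp.
  by move=> w; rewrite -[`|X w|]normrN; apply: max_norm.
have hb : L1 P (fun w => Z w * Num.max (X w) 0).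
  apply: hab.
    apply: (measurable_maxr (f := fun w => X w) (g := fun _ => 0)) => //; exact: measurable_cst.
  by move=> w; apply: max_norm.
rewrite /Eneg.
rewrite (Rint_EFin ha) (Rint_EFin hb) /=.
rewrite -EFinB; congr EFin.
rewrite -RintegralB //.
rewrite (@eq_Rintegral _ _ _ _ _ (fun w => \sum_i pi 0 i * (- (Z w * (ret S0 S1 i w - r))))); last first.
  move=> w _; rewrite eZX -mulrBr max_diff; ring.
rewrite Rint_lin //; rewrite /dotv; apply: eq_bigr => i _; by rewrite mxE.
Qed.

Lemma span_step {R : fieldType} {T : Type} {n m : nat} (G : set T) (v : T -> 'rV[R]_n)
  (f : 'I_m -> T) :
  (forall p : 'rV[R]_n, (forall w, G w -> v w *m p^T = 0) -> p = 0) ->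
  (\rank (\matrix_j v (f j)) < n)%N -> exists2 w, G w & ~~ (v w <= \matrix_j v (f j))%MS.
Proof.
move=> horth hr.
set M := \matrix_j v (f j).
set K := kermx M^T.
have rK : \rank K = (n - \rank M)%N by rewrite mxrank_ker mxrank_tr.
have [i hi] : exists i, row i K != 0.
  apply: contrapT => hno.
  have K0 : K = 0.
    apply/row_matrixP => i; rewrite row0; apply/eqP; apply/negPn/negP => hn.
    by apply: hno; exists i.
  by move: rK; rewrite K0 mxrank0 => /esym/eqP; rewrite subn_eq0 leqNgt hr.
set p := row i K.
have hp : p *m M^T = 0 by apply/sub_kermxP; exact: row_sub.
have e : M *m p^T = 0 by rewrite -[M *m p^T]trmxK trmx_mul trmxK hp trmx0.
apply: contrapT => hno.
have p0 : p = 0.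
  apply: horth => w Gw.
  have : (v w <= M)%MS by apply/negPn/negP => hn; apply: hno; exists w.
  by case/submxP => D ->; rewrite -mulmxA e mulmx0.
by move: hi; rewrite -/p p0 eqxx.
Qed.

Lemma span_exists {R : fieldType} {T : Type} {n : nat} (G : set T) (v : T -> 'rV[R]_n) :
  (forall p : 'rV[R]_n, (forall w, G w -> v w *m p^T = 0) -> p = 0) ->
  exists m (f : 'I_m -> T), (forall j, G (f j)) /\ row_full (\matrix_j v (f j)).
Proof.
move=> horth.
suff: forall k, (k <= n)%N -> exists m (f : 'I_m -> T),
    (forall j, G (f j)) /\ (k <= \rank (\matrix_j v (f j)))%N.
  move=> /(_ n (leqnn n)) [m [f [Gf hr]]]; exists m, f; split => //.
  by rewrite /row_full eqn_leq rank_leq_col hr.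
elim => [_|k IH hk].
  exists 0%N, (fun j : 'I_0 => match j with Ordinal j hj => False_rect T (Bool.diff_false_true hj) end).
  by split => // -[].
have [m [f [Gf hr]]] := IH (ltnW hk).
have [hr'|hr'] := leqP k.+1 (\rank (\matrix_j v (f j))).
  by exists m, f.
have hrk : \rank (\matrix_j v (f j)) = k by apply/eqP; rewrite eqn_leq hr andbT -ltnS.
have [w Gw hw] := span_step _ _ f horth (leq_trans hr' hk).
pose f' := fun j : 'I_(m + 1) => match fintype.split j with inl a => f a | inr _ => w end.
exists (m + 1)%N, f'; split.
  by move=> j; rewrite /f'; case: (fintype.split j).
set M := \matrix_j v (f j).
set M' := \matrix_j v (f' j).
have s1 : (M <= M')%MS.
  apply/row_subP => j; rewrite rowK.
  have -> : v (f j) = row (lshift 1 j) M'.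
    by rewrite rowK /f' -[lshift 1 j]/(unsplit (inl j)) unsplitK.
  exact: row_sub.
have s2 : (v w <= M')%MS.
  have -> : v w = row (rshift m (0 : 'I_1)) M'.
    by rewrite rowK /f' -[rshift m _]/(unsplit (inr (0 : 'I_1))) unsplitK.
  exact: row_sub.
have lt1 : (M < (M + v w)%MS)%MS.
  rewrite ltmxE addsmxSl /=; apply/negP => h; apply/negP: hw.
  by apply/negPn; apply: submx_trans h; exact: addsmxSr.
have := rank_ltmx lt1.
have := mxrankS (A := (M + v w)%MS) (B := M'); rewrite addsmx_sub s1 s2 => /(_ isT).
rewrite -/M hrk; move=> h1 h2; exact: leq_trans h2 h1.
Qed.

Lemma cvg_sumI {R : realType} {m : nat} (u : 'I_m -> nat -> R) (l : 'I_m -> R) :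
  (forall j, u j n @[n --> \oo] --> l j) ->
  (\sum_j u j n) @[n --> \oo] --> \sum_j l j.
Proof.
move=> hu.
apply: (@cvg_big _ _ +%R 0 xpredT _ _ _ (index_enum 'I_m) u l) => //.
exact: add_continuous.
Qed.

Lemma dotv_mx {R : realType} {n : nat} (p c : 'rV[R]_n) : dotv p c = (c *m p^T) 0 0.
Proof. by rewrite /dotv mxE; apply: eq_bigr => i _; rewrite mxE mulrC. Qed.

Lemma dotv_comb {R : realType} {n m : nat} (p : 'rV[R]_n) (D : 'M[R]_(1, m)) (M : 'M[R]_(m, n)) :
  dotv p (D *m M) = \sum_j D 0 j * dotv p (row j M).
Proof.
rewrite /dotv; under eq_bigr do rewrite mxE mulr_sumr.
rewrite exchange_big /=; apply: eq_bigr => j _; rewrite mulr_sumr.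
by apply: eq_bigr => i _; rewrite mxE; ring.
Qed.

Lemma Xpi_dotv {d} {T : measurableType d} {R : realType} {n : nat} (S0 : 'I_n -> R)
  (S1 : 'I_n -> T -> R) (r : R) (p : 'rV[R]_n) (w : T) :
  Xpi S0 S1 r p w = dotv p (\row_i (ret S0 S1 i w - r)).
Proof. by rewrite /Xpi /dotv; apply: eq_bigr => i _; rewrite mxE. Qed.

Lemma nonred_X {d} {T : measurableType d} {R : realType} {P : probability T R} {n : nat}
  (S0 : 'I_n -> R) (S1 : 'I_n -> T -> R) (r : R) :
  nonredundant P r S0 S1 -> (forall i, 0 < S0 i) ->
  forall p : 'rV[R]_n, {ae P, forall w, Xpi S0 S1 r p w = 0} -> p = 0.
Proof.
move=> hnr hS0 p hX.
have nz : forall i, S0 i != 0 by move=> i; rewrite gt_eqF.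
have h : forall i, p 0 i / S0 i = 0.
  apply: (proj2 (hnr (- \sum_i p 0 i) (fun i => p 0 i / S0 i) _ _)).
- rewrite mulr1.
  have -> : \sum_i p 0 i / S0 i * S0 i = \sum_i p 0 i by apply: eq_bigr => i _; rewrite divfK.
  by rewrite addNr.
- apply: filterS hX => w hw; rewrite -[X in _ = X]hw /Xpi /ret mulNr mulr_suml -sumrN -big_split /=.
  apply: eq_bigr => i _; by field.
apply/rowP => i; rewrite mxE; have := h i; move/eqP; rewrite mulf_eq0 invr_eq0 (negbTE (nz i)) orbF.
by move/eqP.
Qed.

Theorem proposition4p3
  (disp : measure_display) (T : measurableType disp) (R : realType)
  (P : probability T R) (d : nat) (r : R)
  (S0 : 'I_d -> R) (S1 : 'I_d -> T -> R)
  (L Q : set (T -> R))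
  (hr : -1 < r)
  (hS0 : forall i, 0 < S0 i)
  (hS1 : forall i, measurable_fun setT (S1 i))
  (hnonred : nonredundant P r S0 S1)
  (hRint : forall i, L1 P (ret S0 S1 i))
  (hEr : exists i, (\int[P]_w (ret S0 S1 i w)%:E)%E <> r%:E)
  (hL : riesz_space L)
  (hLinf : Linfty P `<=` L)
  (hL1 : L `<=` L1 P)
  (hXL : forall pi : 'rV[R]_d, L (Xpi S0 S1 r pi))
  (hQD : Q `<=` Dset P)
  (hQconv : convex_fun_set Q)
  (hQ1 : Q (fun _ => 1))
  (condI : forall i Z, Q Z -> L1 P (fun w => Z w * ret S0 S1 i w)) :
  convex_rV (CQ P Q S0 S1 r) /\
  (forall pi : 'rV[R]_d,
     rho P Q (Xpi S0 S1 r pi) =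
     ereal_sup [set (dotv pi c)%:E | c in CQ P Q S0 S1 r]) /\
  (forall (Xn : nat -> T -> R) (X Y : T -> R),
     (forall n, exists pi : 'rV[R]_d, Xn n = Xpi S0 S1 r pi) ->
     (exists pi : 'rV[R]_d, X = Xpi S0 S1 r pi) ->
     L Y ->
     {ae P, forall w, Xn n w @[n --> \oo] --> X w} ->
     (forall n, {ae P, forall w, `|Xn n w| <= Y w}) ->
     (rho P Q X <= limn_einf (fun n => rho P Q (Xn n)))%E).
Proof.
have hi : forall Z i, Q Z -> L1 P (fun w => - (Z w * (ret S0 S1 i w - r))).
  move=> Z i hZ; have [hZ1 _] := hQD Z hZ.
  apply: (L1_ext (f := fun w => (-1) * (Z w * ret S0 S1 i w) + r * Z w)); first by move=> w; ring.
  by apply: L1_add; apply: L1_scale; [exact: condI | exact: hZ1].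
have hXm : forall pi, measurable_fun setT (Xpi S0 S1 r pi).
  by move=> pi; exact: (L1_meas (hL1 _ (hXL pi))).
have part2 : forall pi, rho P Q (Xpi S0 S1 r pi) =
    ereal_sup [set (dotv pi c)%:E | c in CQ P Q S0 S1 r].
  move=> pi; rewrite /rho; congr ereal_sup; apply/seteqP; split => x.
  - case=> Z hZ <-; have [hZ1 _] := hQD Z hZ.
    exists (\row_i Rintegral P setT (fun w => - (Z w * (ret S0 S1 i w - r)))); first by exists Z.
    by rewrite Eneg_dot // => i; exact: condI.
  - case=> c [Z hZ ->] <-; have [hZ1 _] := hQD Z hZ.
    by exists Z => //; rewrite Eneg_dot // => i; exact: condI.
split.
  move=> c1 c2 t [Z1 hZ1 ->] [Z2 hZ2 ->] ht.
  exists (fun w => t * Z1 w + (1 - t) * Z2 w); first exact: hQconv.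
  apply/rowP => i; rewrite !mxE; apply: esym.
  rewrite (@eq_Rintegral _ _ _ _ _ (fun w => t * (- (Z1 w * (ret S0 S1 i w - r))) +
     (1 - t) * (- (Z2 w * (ret S0 S1 i w - r))))); last by move=> w _; ring.
  have h1 := L1_scale t _ (hi Z1 i hZ1); have h2 := L1_scale (1 - t) _ (hi Z2 i hZ2).
  rewrite (RintegralD measurableT h1 h2).
  by rewrite (RintegralZl _ measurableT (hi Z1 i hZ1)) (RintegralZl _ measurableT (hi Z2 i hZ2)).
split; first exact: part2.
move=> Xn X Y hXn [pi0 ->] hY hcv hdom.
have [pis hpis] := choice hXn.
pose v := fun w => (\row_i (ret S0 S1 i w - r) : 'rV[R]_d).
pose G := fun w => Xn n w @[n --> \oo] --> Xpi S0 S1 r pi0 w.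
have horth : forall p : 'rV[R]_d, (forall w, G w -> v w *m p^T = 0) -> p = 0.
  move=> p hp; apply: (nonred_X _ _ _ hnonred hS0); apply: filterS hcv => w Gw.
  by rewrite Xpi_dotv dotv_mx hp // mxE.
have [m [f [Gf hfull]]] := span_exists G v horth.
rewrite part2; apply: ge_ereal_sup => _ [c hc <-].
have [D hD] := submxP (submx_full c hfull).
have dc : forall p, dotv p c = \sum_j D 0 j * Xpi S0 S1 r p (f j).
  by move=> p; rewrite hD dotv_comb; apply: eq_bigr => j _; rewrite rowK Xpi_dotv.
have cv : (dotv (pis n) c)%:E @[n --> \oo] --> (dotv pi0 c)%:E.
  apply/fine_cvgP; split; first exact: nearW.
  have -> : fine \o (fun n => (dotv (pis n) c)%:E) = fun n => \sum_j D 0 j * Xn n (f j).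
    by apply/funext => n /=; rewrite dc hpis.
  rewrite dc; apply: cvg_sumI => j; apply: cvgMr; exact: Gf j.
rewrite -(cvg_limn_einf_sup cv).1; apply: limn_einf_le => n.
rewrite hpis part2; apply: ereal_sup_ubound; by exists c.
Qed.
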